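(* Let $q\in\mathbb{C}$, $|q|<1$. For all $u,v\in\mathfrak{A}^0_{\mathrm{G}}$, $$\mathfrak{z}_q[u*_{\mathrm{G}}v]=\mathfrak{z}_q[u\sqcup\!\sqcup v]=\mathfrak{z}_q[u]\,\mathfrak{z}_q[v].$$
   Context: Let $Y_{\mathrm{G}}=\{z_{t,s}:t,s\in\mathbb{Z},\,0\le t\le s\}$ and $\mathfrak{A}_{\mathrm{G}}$ the free noncommutative $\mathbb{Q}$-algebra on $Y_{\mathrm{G}}$ (unit $\mathbf{1}$). $\mathfrak{A}^0_{\mathrm{G}}$ is the span of words $z_{t_1,s_1}\cdots z_{t_d,s_d}$ ($d\ge1$) with $t_1\ge1$. The stuffle $*_{\mathrm{G}}$ is bilinear with $\mathbf{1}*u=u*\mathbf{1}=u$ and $(z_{t,s}u)*(z_{t',s'}v)=z_{t,s}(u*z_{t',s'}v)+z_{t',s'}(z_{t,s}u*v)+z_{t+t',s+s'}(u*v)$. Map $\mathfrak{A}_{\mathrm{G}}$ into $\mathbb{Q}\langle\pi,y\rangle$ by the algebra homomorphism $z_{t,s}\mapsto\rho^t\pi^{s-t}y$, $\rho=\pi-\mathbf{1}$; elements of $\mathfrak{A}_{\mathrm{G}}$ are identified with their images. The shuffle $\sqcup\!\sqcup$ on $\mathbb{Q}\langle\pi,y\rangle$: bilinear, $\mathbf{1}\sqcup\!\sqcup u=u\sqcup\!\sqcup\mathbf{1}=u$, $(yu)\sqcup\!\sqcup v=u\sqcup\!\sqcup(yv)=y(u\sqcup\!\sqcup v)$, $\pi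 u\sqcup\!\sqcup\pi v=\pi(u\sqcup\!\sqcup\pi v)+\pi(\pi u\sqcup\!\sqcup v)-\pi(u\sqcup\!\sqcup v)$. Realization: let $\Phi$ be the algebra homomorphism from $\mathbb{Q}\langle\pi,y\rangle$ to operators on power series in $t$ with $\Phi(\pi)=\mathbf{P}$, $\mathbf{P}[f](t)=\sum_{k\ge0}f(q^kt)$, and $\Phi(y)=$ multiplication by $t/(1-t)$; for $W$ in the image of $\mathfrak{A}^0_{\mathrm{G}}$ set $\mathfrak{z}_q[W]=\Phi(W)[1]$ evaluated at $t=1$. (For a word, $\mathfrak{z}_q[z_{t_1,s_1}\cdots z_{t_d,s_d}]=\sum_{k_1>\dots>k_d>0}\prod_j q^{k_jt_j}(1-q^{k_j})^{-s_j}$.) *)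

(* Defs.v *)
From mathcomp Require Import all_boot all_order all_algebra.
From mathcomp Require Import reals.
From mathcomp Require Import complex.

Set Implicit Arguments.
Unset Strict Implicit.
Unset Printing Implicit Defensive.

Import Order.TTheory GRing.Theory Num.Theory.
Local Open Scope ring_scope.

(* An element of the free noncommutative Q-algebra on an alphabet A is
   represented by a finite formal linear combination [:: (c1, w1); ...]
   meaning c1 w1 + ... ; all maps below are defined (bi)linearly on such
   representations, and z_q is a linear functional, so nothing depends on
   the chosen representation. *)
Definition lc (A : Type) := seq (rat * seq A).

Definition lc_one (A : Type) : lc A := [:: (1, [::])].
Definition lc_cons (A : Type) (a : A) (x : lc A) : lc A :=
  [seq (p.1, a :: p.2) | p <- x].
Definition lc_scale (A : Type) (c : rat) (x : lc A) : lc A :=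
  [seq (c * p.1, p.2) | p <- x].
Definition lc_mul (A : Type) (x y : lc A) : lc A :=
  [seq (p.1 * r.1, p.2 ++ r.2) | p <- x, r <- y].
Definition lc_bil (A B : Type) (f : seq A -> seq A -> lc B) (x y : lc A) : lc B :=
  flatten [seq [seq (p.1 * r.1 * s.1, s.2) | s <- f p.2 r.2] | p <- x, r <- y].

(* the letter z_{t,s} is the pair (t, s); it is a letter of Y_G iff t <= s *)
Definition YG_letter (a : nat * nat) : bool := (a.1 <= a.2)%N.

Definition A0_word (w : seq (nat * nat)) : bool :=
  match w with
  | [::] => false
  | a :: _ => (1 <= a.1)%N && all YG_letter w
  end.
Definition in_A0 (u : lc (nat * nat)) : bool := all (fun p => A0_word p.2) u.

Fixpoint stuffle_w (u v : seq (nat * nat)) {struct u} : lc (nat * nat) :=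
  match u with
  | [::] => [:: (1, v)]
  | a :: u' =>
      let fix stv (v0 : seq (nat * nat)) : lc (nat * nat) :=
        match v0 with
        | [::] => [:: (1, u)]
        | b :: v' =>
            lc_cons a (stuffle_w u' v0)
            ++ lc_cons b (stv v')
            ++ lc_cons (a.1 + b.1, a.2 + b.2)%N (stuffle_w u' v')
        end in
      stv v
  end.

Definition stuffle (x y : lc (nat * nat)) : lc (nat * nat) := lc_bil stuffle_w x y.

Inductive PY := Pi | Yl.

Fixpoint shuffle_w (u v : seq PY) {struct u} : lc PY :=
  match u with
  | [::] => [:: (1, v)]
  | a :: u' =>
      let fix shv (v0 : seq PY) : lc PY :=
        match v0 with
        | [::] => [:: (1, u)]
        | b :: v' =>
            match a, b with
            | Yl, _ => lc_cons Yl (shuffle_w u' v0)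
            | Pi, Yl => lc_cons Yl (shv v')
            | Pi, Pi =>
                lc_cons Pi (shuffle_w u' v0)
                ++ lc_cons Pi (shv v')
                ++ lc_scale (-1) (lc_cons Pi (shuffle_w u' v'))
            end
        end in
      shv v
  end.

Definition shuffle (x y : lc PY) : lc PY := lc_bil shuffle_w x y.

(* ---------- the homomorphism z_{t,s} |-> rho^t pi^(s-t) y, rho = pi - 1 ---------- *)
Definition lc_rho : lc PY := [:: (1, [:: Pi]); (-1, [::])].
Definition img_letter (a : nat * nat) : lc PY :=
  lc_mul (iter a.1 (lc_mul lc_rho) (lc_one PY))
         (lc_mul [:: (1, nseq (a.2 - a.1)%N Pi)] [:: (1, [:: Yl])]).
Definition img_word (w : seq (nat * nat)) : lc PY :=
  foldr (fun a acc => lc_mul (img_letter a) acc) (lc_one PY) w.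
Definition img (x : lc (nat * nat)) : lc PY :=
  flatten [seq lc_scale p.1 (img_word p.2) | p <- x].

Section Realization.
Variable R : realType.
Local Notation C := R[i].

(* formal power series in t are coefficient sequences nat -> C *)
(* P[f](t) = sum_k f(q^k t): on coefficients, t^n |-> t^n / (1 - q^n) *)
(* multiplication by t/(1-t): coefficient n becomes sum_{m<n} a_m *)
Definition Phi_letter (q : C) (l : PY) (a : nat -> C) : nat -> C :=
  match l with
  | Pi => fun n => a n / (1 - q ^+ n)
  | Yl => fun n => \sum_(m < n) a m
  end.

Definition Phi_word (q : C) (w : seq PY) (a : nat -> C) : nat -> C :=
  foldr (Phi_letter q) a w.

Definition ps_one : nat -> C := fun n => (n == 0%N)%:R.

Definition zq_coef (q : C) (W : lc PY) (n : nat) : C :=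
  \sum_(p <- W) ratr p.1 * Phi_word q p.2 ps_one n.

Definition series_sums_to (a : nat -> C) (l : C) : Prop :=
  forall e : R, 0 < e -> exists N : nat, forall n : nat, (N <= n)%N ->
    `| \sum_(k < n) a k - l | < (e%:C)%C.

(* z_q[W] = z : Phi(W)[1] evaluated at t = 1, i.e. the sum of its coefficients *)
Definition zq_is (q : C) (W : lc PY) (z : C) : Prop :=
  series_sums_to (zq_coef q W) z.

End Realization.

(* Main.v *)
Require Import Defs.
From mathcomp Require Import all_boot all_order all_algebra.
From mathcomp Require Import reals.
From mathcomp Require Import complex.
From mathcomp Require Import classical_sets boolp.
From mathcomp Require Import ring lra zify.
Import Order.TTheory GRing.Theory Num.Theory.
Local Open Scope ring_scope.
Local Open Scope complex_scope.

Section Real.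
Variable R : realType.
Local Notation C := R[i].

Lemma mono_le (s : nat -> R) : (forall n, s n <= s n.+1) ->
  forall m n, (m <= n)%N -> s m <= s n.
Proof.
move=> hs m n /subnK <-; elim: (n - m)%N => [|k IH]; first by rewrite add0n.
by rewrite addSn (le_trans IH).
Qed.

Definition cvgR (s : nat -> R) L :=
  forall e : R, 0 < e -> exists N, forall n, (N <= n)%N -> `|s n - L| < e.

Lemma mono_cvg (s : nat -> R) (B : R) : (forall n, s n <= s n.+1) -> (forall n, s n <= B) ->
  exists L, cvgR s L.
Proof.
move=> hs hB.
have hE : has_sup (range s).
  split; first by exists (s 0%N), 0%N.
  by exists B => x [n _ <-].
exists (sup (range s)) => e e0.
have [x [N _ <-] hx] := sup_adherent e0 hE.
exists N => n hn.
have h1 : s n <= sup (range s) by apply: sup_upper_bound => //; exists n.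
have h2 := @mono_le s hs _ _ hn.
rewrite ler0_norm ?subr_le0 //; lra.
Qed.

Lemma archi_exists (x : R) : exists N : nat, x < N%:R.
Proof.
case: (lerP x 0) => hx; first by exists 1%N; lra.
by exists (Num.Def.archi_bound x); apply: archi_boundP; lra.
Qed.

Lemma cvgR_sub {s t : nat -> R} {Ls Lt : R} : cvgR s Ls -> cvgR t Lt -> cvgR (fun n => s n - t n) (Ls - Lt).
Proof.
move=> hs ht e e0.
have e2 : 0 < e / 2 by lra.
have [N1 h1] := hs _ e2; have [N2 h2] := ht _ e2.
exists (maxn N1 N2) => n hn.
have := h1 n (leq_trans (leq_maxl _ _) hn); have := h2 n (leq_trans (leq_maxr _ _) hn).
have -> : s n - t n - (Ls - Lt) = (s n - Ls) - (t n - Lt) by ring.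
move=> a b; apply: le_lt_trans (ler_normB _ _) _; lra.
Qed.

Lemma abs_cvg_R (x : nat -> R) (B : R) : (forall N, \sum_(n < N) `|x n| <= B) ->
  exists L, cvgR (fun N => \sum_(n < N) x n) L.
Proof.
move=> hB.
have [LP hP] : exists L, cvgR (fun N => \sum_(n < N) (x n + `|x n|)) L.
  apply: (@mono_cvg _ (B + B)).
    move=> n; rewrite big_ord_recr /= lerDl.
    by have := ler_norm (- x n); rewrite normrN; lra.
  move=> n; rewrite big_split /=; apply: lerD => //.
  apply: le_trans (ler_norm _) _; apply: le_trans (hB n); exact: ler_norm_sum.
  exact: hB.
have [LQ hQ] : exists L, cvgR (fun N => \sum_(n < N) `|x n|) L.
  by apply: (@mono_cvg _ B) => // m; rewrite big_ord_recr /= lerDl.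
exists (LP - LQ) => e e0.
have [N hN] := cvgR_sub hP hQ _ e0.
exists N => n /hN; congr (_ < _); congr `|_ - _|.
by rewrite big_split /= addrK.
Qed.

Definition nc (z : C) : R := complex.Re `|z|.

Lemma ncE z : `|z| = (nc z)%:C.
Proof. by rewrite /nc normc_def. Qed.

Lemma nc0 : nc 0 = 0.
Proof. by apply: complexI; rewrite -ncE normr0 rmorph0. Qed.

Lemma nc1 : nc 1 = 1.
Proof. by rewrite /nc normr1. Qed.

Lemma nc_ge0 z : 0 <= nc z.
Proof. by rewrite -ler0c -ncE. Qed.

Lemma ncM x y : nc (x * y) = nc x * nc y.
Proof. by apply: complexI; rewrite rmorphM -!ncE normrM. Qed.

Lemma ncD x y : nc (x + y) <= nc x + nc y.
Proof. by rewrite -lecR rmorphD -!ncE ler_normD. Qed.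

Lemma ncN x : nc (- x) = nc x.
Proof. by rewrite /nc normrN. Qed.

Lemma ncB x y : nc (x - y) <= nc x + nc y.
Proof. by rewrite -(ncN y) ncD. Qed.

Lemma ncV x : nc (x^-1) = (nc x)^-1.
Proof.
have [->|x0] := eqVneq x 0; first by rewrite invr0 nc0 invr0.
have nx0 : nc x != 0.
  by apply: contra x0 => /eqP h; rewrite -normr_eq0 ncE h.
by apply: (mulfI nx0); rewrite -ncM mulfV // divrr ?unitfE // nc1.
Qed.

Lemma ncX x n : nc (x ^+ n) = nc x ^+ n.
Proof. by apply: complexI; rewrite rmorphXn -!ncE normrX. Qed.

Lemma nc_real (a : R) : nc (a%:C) = `|a|.
Proof. by rewrite /nc normc_def /= expr0n /= addr0 sqrtr_sqr. Qed.

Lemma nc_sum (I : Type) (s : seq I) (F : I -> C) :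
  nc (\sum_(i <- s) F i) <= \sum_(i <- s) nc (F i).
Proof.
elim: s => [|i s IH]; first by rewrite !big_nil nc0.
by rewrite !big_cons (le_trans (ncD _ _)) // lerD2l.
Qed.

Lemma nc_lt e z : nc z < e -> `|z| < e%:C.
Proof. by rewrite ncE ltcR. Qed.

Lemma nc_Re z : `|complex.Re z| <= nc z.
Proof.
rewrite /nc normc_def /= -sqrtr_sqr ler_sqrt ?addr_ge0 ?sqr_ge0 //.
by rewrite lerDl sqr_ge0.
Qed.

Lemma nc_Im z : `|complex.Im z| <= nc z.
Proof.
rewrite /nc normc_def /= -sqrtr_sqr ler_sqrt ?addr_ge0 ?sqr_ge0 //.
by rewrite lerDr sqr_ge0.
Qed.

Lemma nc_le_ReIm z : nc z <= `|complex.Re z| + `|complex.Im z|.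
Proof.
rewrite /nc normc_def /=.
set a := complex.Re z; set b := complex.Im z.
have ha : `|a| ^+ 2 = a ^+ 2 by rewrite -normrX ger0_norm // sqr_ge0.
have hb : `|b| ^+ 2 = b ^+ 2 by rewrite -normrX ger0_norm // sqr_ge0.
have h0 : 0 <= `|a| + `|b| by rewrite addr_ge0.
rewrite -(ger0_norm h0) -(sqrtr_sqr (`|a| + `|b|)) ler_sqrt ?sqr_ge0 //.
rewrite sqrrD ha hb.
have := mulr_ge0 (normr_ge0 a) (normr_ge0 b).
set p := `|a| * `|b|. lra.
Qed.

Lemma ReD (x y : C) : complex.Re (x + y) = complex.Re x + complex.Re y. Proof. by case: x; case: y. Qed.
Lemma ImD (x y : C) : complex.Im (x + y) = complex.Im x + complex.Im y. Proof. by case: x; case: y. Qed.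
Lemma ReN (x : C) : complex.Re (- x) = - complex.Re x. Proof. by case: x. Qed.
Lemma ImN (x : C) : complex.Im (- x) = - complex.Im x. Proof. by case: x. Qed.

Lemma Re_sum n (F : nat -> C) : complex.Re (\sum_(k < n) F k) = \sum_(k < n) complex.Re (F k).
Proof. by apply: (big_morph (@complex.Re R) ReD). Qed.
Lemma Im_sum n (F : nat -> C) : complex.Im (\sum_(k < n) F k) = \sum_(k < n) complex.Im (F k).
Proof. by apply: (big_morph (@complex.Im R) ImD). Qed.

Lemma abs_cvg_C (a : nat -> C) (B : R) : (forall N, \sum_(n < N) nc (a n) <= B) ->
  exists l, series_sums_to a l.
Proof.
move=> hB.
have [L1 h1] : exists L, cvgR (fun N => \sum_(n < N) complex.Re (a n)) L.
  apply: (@abs_cvg_R (fun n => complex.Re (a n)) B) => N; apply: le_trans (hB N).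
  by apply: ler_sum => i _; exact: nc_Re.
have [L2 h2] : exists L, cvgR (fun N => \sum_(n < N) complex.Im (a n)) L.
  apply: (@abs_cvg_R (fun n => complex.Im (a n)) B) => N; apply: le_trans (hB N).
  by apply: ler_sum => i _; exact: nc_Im.
exists (Complex L1 L2) => e e0.
have e2 : 0 < e / 2 by lra.
have [N1 k1] := h1 _ e2; have [N2 k2] := h2 _ e2.
exists (maxn N1 N2) => n hn; apply: nc_lt.
apply: le_lt_trans (nc_le_ReIm _) _.
rewrite ReD ImD ReN ImN Re_sum Im_sum /=.
have := k1 n (leq_trans (leq_maxl _ _) hn); have := k2 n (leq_trans (leq_maxr _ _) hn).
lra.
Qed.


Lemma geom_le (l : R) n : 1 < l -> (\sum_(m < n) l ^+ m) * (l - 1) <= l ^+ n.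
Proof.
move=> hl; elim: n => [|n IH]; first by rewrite big_ord0 mul0r expr0.
rewrite big_ord_recr /= mulrDl exprS.
have : 0 <= l ^+ n by rewrite exprn_ge0 //; lra.
nra.
Qed.

Lemma geom_lt1 (r : R) n : 0 <= r -> r < 1 -> (\sum_(m < n) r ^+ m) * (1 - r) <= 1.
Proof.
move=> h0 h1.
suff : (\sum_(m < n) r ^+ m) * (1 - r) = 1 - r ^+ n.
  by move=> ->; have := exprn_ge0 n h0; lra.
elim: n => [|n IH]; first by rewrite big_ord0 mul0r expr0 subrr.
by rewrite big_ord_recr /= mulrDl IH exprS; ring.
Qed.

Lemma nat_sq_ge0 n : 0 <= (n%:R : R) * (n%:R - 1).
Proof.
case: n => [|n]; first by rewrite mul0r.
by rewrite mulr_ge0 // -natr1 addrK.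
Qed.

Lemma bern2 (d : R) n : 0 <= d ->
  1 + n%:R * d + n%:R * (n%:R - 1) / 2 * d ^+ 2 <= (1 + d) ^+ n.
Proof.
move=> hd; elim: n => [|n IH]; first by rewrite expr0 mul0r !mul0r !addr0.
rewrite [X in _ <= X]exprS -natr1.
have h1 := nat_sq_ge0 n.
have h2 : 0 <= d ^+ 3 by rewrite exprn_ge0.
have h3 : 0 <= (1 + d) by lra.
have H := ler_wpM2l h3 IH.
set m := (n%:R : R) in h1 H *.
have h4 : 0 <= m * (m - 1) * (d * d * d) by rewrite mulr_ge0 // !mulr_ge0.
apply: (le_trans _ H).
rewrite !expr2; nra.
Qed.

Lemma npow_small (r : R) : 0 <= r -> r < 1 ->
  forall e : R, 0 < e -> exists N, forall n, (N <= n)%N -> n%:R * r ^+ n <= e.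
Proof.
move=> h0 h1 e e0.
set s := (1 + r) / 2.
have s0 : 0 < s by rewrite /s; lra.
have s1 : s < 1 by rewrite /s; lra.
have rs : r <= s by rewrite /s; lra.
set d := s^-1 - 1.
have d0 : 0 < d.
  by rewrite /d subr_gt0 invf_gt1.
have ds : s * (1 + d) = 1 by rewrite /d addrC subrK mulfV //; lra.
have [N hN] := archi_exists (2 / (d ^+ 2 * e) + 1).
exists N => n hn.
have hnN : (N%:R : R) <= n%:R by rewrite ler_nat.
have hp : 0 < d ^+ 2 * e by rewrite mulr_gt0 // exprn_gt0.
have hq : 2 < (n%:R - 1) * (d ^+ 2 * e).
  rewrite -ltr_pdivrMr //; lra.
have hb := @bern2 d n (ltW d0 : 0 <= d).
have hsn : s ^+ n * (1 + d) ^+ n = 1 by rewrite -exprMn ds expr1n.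
have hsn0 : 0 <= s ^+ n by rewrite exprn_ge0 // ltW.
have hrs : r ^+ n <= s ^+ n by rewrite lerXn2r // ?nnegrE // ltW.
have hn0 : 0 <= (n%:R : R) by [].
have hd2 : 0 <= d ^+ 2 by rewrite exprn_ge0 // ltW.
set t := n%:R * s ^+ n.
have ht0 : 0 <= t by rewrite /t mulr_ge0.
have htr : n%:R * r ^+ n <= t by rewrite /t ler_wpM2l.
suff : t <= e by lra.
have key : t * ((n%:R - 1) * d ^+ 2 / 2) <= 1.
  have := ler_wpM2l hsn0 hb; rewrite hsn.
  have hnn := nat_sq_ge0 n.
  rewrite /t; set m := (n%:R : R) in hnn hn0 *; set S := s ^+ n in hsn0 *.
  set D := d ^+ 2 in hd2 *.
  have hD : 0 <= d by lra.
  have hh : 0 <= S * (1 + m * d) by rewrite mulr_ge0 // addr_ge0 // mulr_ge0.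
  move=> H.
  have -> : m * S * ((m - 1) * D / 2) = S * (1 + m * d + m * (m - 1) / 2 * D) - S * (1 + m * d) by ring.
  lra.
rewrite leNgt; apply/negP => het.
move: hq key het; set m := (n%:R : R); set D := d ^+ 2 => hq key het.
have hX : 0 < (m - 1) * D / 2.
  rewrite ltNge; apply/negP => hX.
  have : (m - 1) * D * e <= 0 by rewrite pmulr_lle0 //; lra.
  lra.
have h1' : e * ((m - 1) * D / 2) < t * ((m - 1) * D / 2) by rewrite ltr_pM2r.
have E1 : e * ((m - 1) * D / 2) = (m - 1) * (D * e) / 2 by ring.
rewrite E1 in h1'.
lra.
Qed.

End Real.

Section Sem.
Variable R : realType.
Local Notation C := R[i].
Variable q : C.

Definition op (x : lc PY) (g : nat -> C) (n : nat) : C :=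
  \sum_(p <- x) ratr p.1 * Phi_word q p.2 g n.

Lemma Phi_word_cons l w g : Phi_word q (l :: w) g = Phi_letter q l (Phi_word q w g).
Proof. by []. Qed.

Lemma Phi_word_cat w1 w2 g : Phi_word q (w1 ++ w2) g = Phi_word q w1 (Phi_word q w2 g).
Proof. by rewrite /Phi_word foldr_cat. Qed.

Lemma Phi_letter_ext l {g h : nat -> C} n : (forall m, g m = h m) -> Phi_letter q l g n = Phi_letter q l h n.
Proof. by move=> e; case: l => /=; [rewrite e | apply: eq_bigr => i _; rewrite e]. Qed.

Lemma Phi_word_ext w {g h : nat -> C} : (forall m, g m = h m) -> forall n, Phi_word q w g n = Phi_word q w h n.
Proof.
elim: w => [|l w IH] e n; first exact: e.
by rewrite !Phi_word_cons; apply: Phi_letter_ext => m; apply: IH.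
Qed.

Lemma Phi_letter_sum l (I : Type) (s : seq I) (c : I -> C) (F : I -> nat -> C) n :
  Phi_letter q l (fun m => \sum_(i <- s) c i * F i m) n = \sum_(i <- s) c i * Phi_letter q l (F i) n.
Proof.
case: l => /=.
  by rewrite mulr_suml; apply: eq_bigr => i _; rewrite mulrA.
rewrite exchange_big /=; apply: eq_bigr => i _; by rewrite mulr_sumr.
Qed.

Lemma Phi_word_sum w (I : Type) (s : seq I) (c : I -> C) (F : I -> nat -> C) n :
  Phi_word q w (fun m => \sum_(i <- s) c i * F i m) n = \sum_(i <- s) c i * Phi_word q w (F i) n.
Proof.
elim: w n => [|l w IH] n //.
rewrite Phi_word_cons.
transitivity (Phi_letter q l (fun m => \sum_(i <- s) c i * Phi_word q w (F i) m) n).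
  by apply: Phi_letter_ext => m; exact: IH.
by rewrite Phi_letter_sum.
Qed.

Lemma op_ext x {g h : nat -> C} : (forall m, g m = h m) -> forall n, op x g n = op x h n.
Proof. by move=> e n; apply: eq_bigr => p _; rewrite (Phi_word_ext _ e). Qed.

Lemma op_cat x y g n : op (x ++ y) g n = op x g n + op y g n.
Proof. by rewrite /op big_cat. Qed.

Lemma op_nil g n : op [::] g n = 0.
Proof. by rewrite /op big_nil. Qed.

Lemma op_cons l x g n : op (lc_cons l x) g n = Phi_letter q l (op x g) n.
Proof. by rewrite /op /lc_cons big_map Phi_letter_sum. Qed.

Lemma op_scale c x g n : op (lc_scale c x) g n = ratr c * op x g n.
Proof.
rewrite /op /lc_scale big_map mulr_sumr; apply: eq_bigr => p _.
by rewrite rmorphM mulrA.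
Qed.

Lemma op_word c w g n : op [:: (c, w)] g n = ratr c * Phi_word q w g n.
Proof. by rewrite /op big_seq1. Qed.

Lemma op_one g n : op (lc_one PY) g n = g n.
Proof. by rewrite /lc_one op_word rmorph1 mul1r. Qed.

Lemma op_mul x y g n : op (lc_mul x y) g n = op x (op y g) n.
Proof.
rewrite /op /lc_mul big_allpairs_dep; apply: eq_bigr => p _.
rewrite Phi_word_sum mulr_sumr; apply: eq_bigr => r _.
by rewrite Phi_word_cat rmorphM !mulrA.
Qed.

Lemma op_bil (f : seq PY -> seq PY -> lc PY) x y g n :
  op (lc_bil f x y) g n = \sum_(p <- x) \sum_(r <- y) ratr p.1 * ratr r.1 * op (f p.2 r.2) g n.
Proof.
rewrite /lc_bil /op big_flatten big_allpairs_dep; apply: eq_bigr => p _.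
apply: eq_bigr => r _; rewrite big_map mulr_sumr; apply: eq_bigr => s _.
by rewrite !rmorphM !mulrA.
Qed.


Definition piN (n : nat) : C := (1 - q ^+ n)^-1.
Definition rhoN (n : nat) : C := piN n - 1.
Definition fa (a : nat * nat) (n : nat) : C := rhoN n ^+ a.1 * piN n ^+ (a.2 - a.1).

Lemma op_rho g n : op lc_rho g n = rhoN n * g n.
Proof.
rewrite /op !big_cons big_nil /= rmorph1 rmorphN1 mul1r mulN1r addr0 /rhoN /piN.
by rewrite mulrBl mul1r mulrC.
Qed.

Lemma op_iter t g n : op (iter t (lc_mul lc_rho) (lc_one PY)) g n = rhoN n ^+ t * g n.
Proof.
elim: t g n => [|t IH] g n; first by rewrite /= op_one expr0 mul1r.
by rewrite iterS op_mul op_rho IH exprS mulrA.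
Qed.

Lemma Phi_nseq k g n : Phi_word q (nseq k Pi) g n = piN n ^+ k * g n.
Proof.
elim: k n => [|k IH] n; first by rewrite expr0 mul1r.
by rewrite /= -/(Phi_word q (nseq k Pi) g) IH exprS /piN mulrC mulrA.
Qed.

Lemma op_img_letter a g n : op (img_letter a) g n = fa a n * \sum_(m < n) g m.
Proof.
rewrite /img_letter op_mul op_iter op_mul op_word Phi_nseq rmorph1 mul1r.
by rewrite op_word rmorph1 mul1r /fa /= mulrA.
Qed.

Lemma op_img_word_cons a w g n :
  op (img_word (a :: w)) g n = fa a n * \sum_(m < n) op (img_word w) g m.
Proof. by rewrite /= op_mul op_img_letter. Qed.

Lemma op_img_word_nil g n : op (img_word [::]) g n = g n.
Proof. exact: op_one. Qed.

Definition G (w : seq (nat * nat)) (n : nat) : C := op (img_word w) (ps_one R) n.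

Lemma zq_coef_img x n : zq_coef q (img x) n = \sum_(p <- x) ratr p.1 * G p.2 n.
Proof.
rewrite /zq_coef /img big_flatten big_map; apply: eq_bigr => p _.
by rewrite -op_scale.
Qed.

Lemma fa_add a b n : YG_letter a -> YG_letter b ->
  fa (a.1 + b.1, a.2 + b.2)%N n = fa a n * fa b n.
Proof.
rewrite /YG_letter /fa /= => ha hb.
have -> : (a.2 + b.2 - (a.1 + b.1) = (a.2 - a.1) + (b.2 - b.1))%N.
  by lia.
rewrite !exprD; ring.
Qed.


Definition S (w : seq (nat * nat)) (N : nat) : C := \sum_(n < N) G w n.

Lemma G_cons a w n : G (a :: w) n = fa a n * S w n.
Proof. exact: op_img_word_cons. Qed.

Lemma S0 w : S w 0 = 0.
Proof. by rewrite /S big_ord0. Qed.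

Lemma S_succ_cons a w N : S (a :: w) N.+1 = S (a :: w) N + fa a N * S w N.
Proof. by rewrite /S big_ord_recr /= -/(S w N) G_cons. Qed.

Lemma S_nil_succ N : S [::] N.+1 = 1.
Proof.
rewrite /S big_ord_recl /G op_img_word_nil /ps_one /= big1 ?addr0 // => i _.
by rewrite op_img_word_nil /ps_one.
Qed.

Definition SL (N : nat) (x : lc (nat * nat)) : C := \sum_(p <- x) ratr p.1 * S p.2 N.

Lemma SL_cat N x y : SL N (x ++ y) = SL N x + SL N y.
Proof. by rewrite /SL big_cat. Qed.

Lemma SL0 x : SL 0 x = 0.
Proof. by rewrite /SL big1 // => p _; rewrite S0 mulr0. Qed.

Lemma SL_word N c w : SL N [:: (c, w)] = ratr c * S w N.
Proof. by rewrite /SL big_seq1. Qed.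

Lemma SL_cons_succ N a x : SL N.+1 (lc_cons a x) = SL N (lc_cons a x) + fa a N * SL N x.
Proof.
rewrite /SL /lc_cons !big_map mulr_sumr -big_split; apply: eq_bigr => p _ /=.
by rewrite S_succ_cons mulrDr mulrCA.
Qed.

Lemma stuffle_nil v : stuffle_w [::] v = [:: (1, v)].
Proof. by []. Qed.
Lemma stuffle_cons_nil a u : stuffle_w (a :: u) [::] = [:: (1, a :: u)].
Proof. by []. Qed.
Lemma stuffle_cons_cons a u b v : stuffle_w (a :: u) (b :: v) =
  lc_cons a (stuffle_w u (b :: v)) ++ lc_cons b (stuffle_w (a :: u) v)
  ++ lc_cons (a.1 + b.1, a.2 + b.2)%N (stuffle_w u v).
Proof. by []. Qed.

Lemma SL_stuffle N u v : all YG_letter u -> all YG_letter v ->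
  SL N (stuffle_w u v) = S u N * S v N.
Proof.
elim: N u v => [|N IH] u v hu hv; first by rewrite SL0 !S0 mulr0.
case: u hu => [|a u] hu.
  by rewrite stuffle_nil SL_word rmorph1 mul1r S_nil_succ mul1r.
case: v hv => [|b v] hv.
  by rewrite stuffle_cons_nil SL_word rmorph1 mul1r S_nil_succ mulr1.
have H0 := IH _ _ hu hv.
move: hu hv => /= /andP [ha hu] /andP [hb hv].
have hau : all YG_letter (a :: u) by rewrite /= ha hu.
have hbv : all YG_letter (b :: v) by rewrite /= hb hv.
have H1 := IH u (b :: v) hu hbv.
have H2 := IH (a :: u) v hau hv.
have H3 := IH u v hu hv.
rewrite stuffle_cons_cons !SL_cat in H0 *.
rewrite !SL_cons_succ H1 H2 H3 !S_succ_cons fa_add //.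
set X := SL N (lc_cons a _) in H0 *.
set Y := SL N (lc_cons b _) in H0 *.
set Z := SL N (lc_cons _ _) in H0 *.
have -> : X + fa a N * (S u N * S (b :: v) N) +
  (Y + fa b N * (S (a :: u) N * S v N) +
   (Z + fa a N * fa b N * (S u N * S v N))) =
  (X + (Y + Z)) + fa a N * (S u N * S (b :: v) N) + fa b N * (S (a :: u) N * S v N)
  + fa a N * fa b N * (S u N * S v N) by ring.
rewrite H0; ring.
Qed.



Lemma SL_bil (f : seq (nat * nat) -> seq (nat * nat) -> lc (nat * nat)) N x y :
  SL N (lc_bil f x y) = \sum_(p <- x) \sum_(r <- y) ratr p.1 * ratr r.1 * SL N (f p.2 r.2).
Proof.
rewrite /lc_bil /SL big_flatten big_allpairs_dep; apply: eq_bigr => p _.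
apply: eq_bigr => r _; rewrite big_map mulr_sumr; apply: eq_bigr => s _.
by rewrite !rmorphM !mulrA.
Qed.

Definition allYG (x : lc (nat * nat)) := all (fun p => all YG_letter p.2) x.

Lemma SL_stuffle_lc N x y : allYG x -> allYG y -> SL N (stuffle x y) = SL N x * SL N y.
Proof.
move=> /allP hx /allP hy.
rewrite /stuffle SL_bil /SL big_distrl /=; apply: eq_big_seq => p hp.
rewrite big_distrr /=; apply: eq_big_seq => r hr.
rewrite -/(SL N (stuffle_w p.2 r.2)) SL_stuffle ?(hx _ hp) ?(hy _ hr) //.
by rewrite mulrACA.
Qed.

Lemma partial_zq x N : \sum_(n < N) zq_coef q (img x) n = SL N x.
Proof.
under eq_bigr => n _ do rewrite zq_coef_img.
rewrite exchange_big /SL; apply: eq_bigr => p _; by rewrite mulr_sumr.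
Qed.


Definition conv (f g : nat -> C) (n : nat) : C := \sum_(i < n.+1) f i * g (n - i)%N.
Definition Yop (f : nat -> C) (n : nat) : C := \sum_(m < n) f m.

Lemma tri f g N : \sum_(n < N) conv f g n = \sum_(i < N) f i * \sum_(j < (N - i)%N) g j.
Proof.
elim: N => [|N IH]; first by rewrite !big_ord0.
rewrite big_ord_recr /= IH [RHS]big_ord_recr /= subSnn big_ord1.
rewrite /conv big_ord_recr /= subnn.
under [in RHS]eq_bigr => i _ do rewrite (subSn (ltnW (ltn_ord i))) big_ord_recr /= mulrDr.
by rewrite big_split /= !addrA.
Qed.

Lemma conv_comm f g n : conv f g n = conv g f n.
Proof.
rewrite /conv (reindex_inj rev_ord_inj) /=; apply: eq_bigr => i _.
rewrite subSS subKn; first by rewrite mulrC.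
by rewrite -ltnS.
Qed.

Lemma conv_one_l g n : conv (ps_one R) g n = g n.
Proof.
rewrite /conv big_ord_recl /= big1 ?addr0 ?subn0 ?mul1r // => i _.
by rewrite /ps_one /= mul0r.
Qed.

Lemma conv_one_r f n : conv f (ps_one R) n = f n.
Proof. by rewrite conv_comm conv_one_l. Qed.

Lemma conv_Y f g n : conv (Yop f) g n = Yop (conv f g) n.
Proof.
rewrite conv_comm {1}/conv big_ord_recr /= subnn /Yop big_ord0 mulr0 addr0.
transitivity (\sum_(m < n) conv g f m); first by rewrite tri.
by apply: eq_bigr => m _; rewrite conv_comm.
Qed.

Definition Pop (f : nat -> C) (n : nat) : C := f n / (1 - q ^+ n).

Lemma conv_P f g n : (forall m, (0 < m)%N -> 1 - q ^+ m != 0) -> f 0%N = 0 -> g 0%N = 0 ->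
  conv (Pop f) (Pop g) n = Pop (conv f (Pop g)) n + Pop (conv (Pop f) g) n - Pop (conv f g) n.
Proof.
move=> hq f0 g0.
rewrite /Pop -mulrDl -mulrBl /conv -big_split -sumrB mulr_suml /=.
apply: eq_bigr => i _.
have [->|i0] := eqVneq (nat_of_ord i) 0%N; first by rewrite f0 !(mul0r, mulr0, addr0, add0r, subr0, subrr).
have [hin|hin] := eqVneq (nat_of_ord i) n.
  by rewrite hin subnn g0 !(mul0r, mulr0, addr0, add0r, subr0, subrr).
have hi : (0 < i)%N by rewrite lt0n.
have hni : (0 < n - i)%N by rewrite subn_gt0 ltn_neqAle hin -ltnS ltn_ord.
have hn : (0 < n)%N by apply: leq_trans hni (leq_subr _ _).
have hx := hq _ hi; have hy := hq _ hni; have hxy := hq _ hn.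
have -> : q ^+ n = q ^+ i * q ^+ (n - i) by rewrite -exprD subnKC // -ltnS ltn_ord.
have {}hxy : 1 - q ^+ i * q ^+ (n - i)%N != 0 by rewrite -exprD subnKC // -ltnS ltn_ord.
move: hx hy hxy; set x := q ^+ i; set y := q ^+ (n - i)%N => hx hy hxy.
by field; rewrite hx hy hxy.
Qed.


Definition isY (l : PY) : bool := if l is Yl then true else false.
Definition E (w : seq PY) : bool := isY (last Yl w).

Lemma E_tail a u : E (a :: u) -> E u.
Proof. by case: u => //= b u. Qed.

Lemma E_Pi u : E (Pi :: u) -> u <> [::].
Proof. by case: u. Qed.

Definition F (w : seq PY) : nat -> C := Phi_word q w (ps_one R).

Lemma F0 a u : F (a :: u) 0%N = 0.
Proof. by case: a; rewrite /F /= ?big_ord0 // expr0 subrr invr0 mulr0. Qed.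

Lemma shuffle_nil v : shuffle_w [::] v = [:: (1, v)].
Proof. by []. Qed.
Lemma shuffle_cons_nil a u : shuffle_w (a :: u) [::] = [:: (1, a :: u)].
Proof. by []. Qed.
Lemma shuffle_Y a u v : shuffle_w (Yl :: u) (a :: v) = lc_cons Yl (shuffle_w u (a :: v)).
Proof. by []. Qed.
Lemma shuffle_PY u v : shuffle_w (Pi :: u) (Yl :: v) = lc_cons Yl (shuffle_w (Pi :: u) v).
Proof. by []. Qed.
Lemma shuffle_PP u v : shuffle_w (Pi :: u) (Pi :: v) =
  lc_cons Pi (shuffle_w u (Pi :: v)) ++ lc_cons Pi (shuffle_w (Pi :: u) v)
  ++ lc_scale (-1) (lc_cons Pi (shuffle_w u v)).
Proof. by []. Qed.

Lemma shuffle_conv (hq : forall m, (0 < m)%N -> 1 - q ^+ m != 0) W1 W2 : E W1 -> E W2 ->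
  forall n, op (shuffle_w W1 W2) (ps_one R) n = conv (F W1) (F W2) n.
Proof.
elim: W1 W2 => [|a u IHu] W2 h1 h2 n.
  by rewrite shuffle_nil op_word rmorph1 mul1r conv_one_l.
elim: W2 h2 n => [|b v IHv] h2 n.
  by rewrite shuffle_cons_nil op_word rmorph1 mul1r conv_one_r.
have hu := @E_tail _ _ h1; have hv := @E_tail _ _ h2.
case: a h1 IHu IHv => h1 IHu IHv; last first.
  rewrite shuffle_Y op_cons.
  rewrite (Phi_letter_ext _ _ (IHu _ hu h2)).
  by rewrite /= -/(Yop _ n) -conv_Y.
case: b h2 IHv hv => h2 IHv hv; last first.
  rewrite shuffle_PY op_cons (Phi_letter_ext _ _ (IHv hv)).
  transitivity (conv (Yop (F v)) (F (Pi :: u)) n); last by rewrite conv_comm.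
  rewrite conv_Y /Yop /=; apply: eq_bigr => m _; exact: conv_comm.
rewrite shuffle_PP !op_cat !op_cons op_scale op_cons.
rewrite (Phi_letter_ext _ _ (IHu _ hu h2)) (Phi_letter_ext _ _ (IHv hv)).
rewrite (Phi_letter_ext _ _ (IHu _ hu hv)).
rewrite rmorphN1 mulN1r addrA.
have := conv_P (F u) (F v) n hq.
case: u hu h1 IHu {IHv} => [|c u] hu h1 IHu; first by have := @E_Pi _ h1.
case: v hv h2 => [|d v] hv h2; first by have := @E_Pi _ h2.
rewrite !F0 => /(_ erefl erefl) ->.
by [].
Qed.


Lemma all_lc_mul (Q1 Q2 P : seq PY -> bool) x y :
  (forall u v, Q1 u -> Q2 v -> P (u ++ v)) ->
  all (fun p => Q1 p.2) x -> all (fun p => Q2 p.2) y -> all (fun p => P p.2) (lc_mul x y).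
Proof.
move=> h; elim: x => [|p x IH] //= /andP [hp hx] hy.
rewrite all_cat IH // andbT all_map.
by apply: sub_all hy => r /= hr; apply: h.
Qed.

Lemma E_cat u v : E u -> E v -> E (u ++ v).
Proof.
by rewrite /E last_cat; case: v => [|b v] //=; case: (last Yl u).
Qed.

Lemma E_cat_r u v : (0 < size v)%N -> E v -> E (u ++ v).
Proof.
by rewrite /E last_cat; case: v => [|b v] //=; case: u => //= a u; case: v.
Qed.

Lemma E_img_word w : all (fun p => E p.2) (img_word w).
Proof.
elim: w => [|a w IH] //=.
apply: (@all_lc_mul E E E) => //; first exact: E_cat.
rewrite /img_letter.
apply: (@all_lc_mul predT (fun v => (0 < size v)%N && E v) E).
- by move=> u v _ /andP [h1 h2]; apply: E_cat_r.
- by elim: (iter _ _ _).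
by rewrite /= size_cat /= addnS /E last_cat.
Qed.

Lemma E_img x : all (fun p => E p.2) (img x).
Proof.
elim: x => [|p x IH] //.
rewrite /img /= all_cat -/(img x) IH andbT /lc_scale all_map.
by apply: sub_all (E_img_word p.2) => r.
Qed.

Lemma conv_bil (I J : Type) (X : seq I) (Y : seq J) c d A B n :
  conv (fun m => \sum_(p <- X) c p * A p m) (fun m => \sum_(r <- Y) d r * B r m) n =
  \sum_(p <- X) \sum_(r <- Y) c p * d r * conv (A p) (B r) n.
Proof.
rewrite /conv.
transitivity (\sum_(i < n.+1) \sum_(p <- X) \sum_(r <- Y) c p * d r * (A p i * B r (n - i)%N)).
  apply: eq_bigr => i _; rewrite mulr_suml; apply: eq_bigr => p _.
  rewrite mulr_sumr; apply: eq_bigr => r _; by rewrite mulrACA.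
rewrite exchange_big; apply: eq_bigr => p _.
rewrite exchange_big; apply: eq_bigr => r _.
by rewrite mulr_sumr.
Qed.

Lemma eq_big_all (T : Type) (P : T -> bool) (s : seq T) (F1 F2 : T -> C) :
  all P s -> (forall x, P x -> F1 x = F2 x) -> \sum_(x <- s) F1 x = \sum_(x <- s) F2 x.
Proof.
move=> hs h; elim: s hs => [|x s IH] /=; first by rewrite !big_nil.
by move=> /andP [hx hs]; rewrite !big_cons h // IH.
Qed.

Lemma zq_shuffle (hq : forall m, (0 < m)%N -> 1 - q ^+ m != 0) x y n :
  zq_coef q (shuffle (img x) (img y)) n = conv (zq_coef q (img x)) (zq_coef q (img y)) n.
Proof.
rewrite [LHS]op_bil /zq_coef conv_bil.
apply: (@eq_big_all _ _ _ _ _ (E_img x)) => p hp.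
apply: (@eq_big_all _ _ _ _ _ (E_img y)) => r hr.
by rewrite shuffle_conv.
Qed.

End Sem.

Arguments mono_le {R}.
Arguments cvgR {R}.
Arguments mono_cvg {R}.
Arguments archi_exists {R}.
Arguments cvgR_sub {R}.
Arguments abs_cvg_R {R}.
Arguments nc {R}.
Arguments ncE {R}.
Arguments nc0 {R}.
Arguments nc1 {R}.
Arguments nc_ge0 {R}.
Arguments ncM {R}.
Arguments ncD {R}.
Arguments ncN {R}.
Arguments ncB {R}.
Arguments ncV {R}.
Arguments ncX {R}.
Arguments nc_real {R}.
Arguments nc_sum {R}.
Arguments nc_lt {R}.
Arguments nc_Re {R}.
Arguments nc_Im {R}.
Arguments nc_le_ReIm {R}.
Arguments ReD {R}.
Arguments ImD {R}.
Arguments ReN {R}.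
Arguments ImN {R}.
Arguments Re_sum {R}.
Arguments Im_sum {R}.
Arguments abs_cvg_C {R}.
Arguments geom_le {R}.
Arguments geom_lt1 {R}.
Arguments nat_sq_ge0 {R}.
Arguments bern2 {R}.
Arguments npow_small {R}.
Arguments op {R}.
Arguments Phi_word_cons {R}.
Arguments Phi_word_cat {R}.
Arguments Phi_letter_ext {R}.
Arguments Phi_word_ext {R}.
Arguments Phi_letter_sum {R}.
Arguments Phi_word_sum {R}.
Arguments op_ext {R}.
Arguments op_cat {R}.
Arguments op_nil {R}.
Arguments op_cons {R}.
Arguments op_scale {R}.
Arguments op_word {R}.
Arguments op_one {R}.
Arguments op_mul {R}.
Arguments op_bil {R}.
Arguments piN {R}.
Arguments rhoN {R}.
Arguments fa {R}.
Arguments op_rho {R}.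
Arguments op_iter {R}.
Arguments Phi_nseq {R}.
Arguments op_img_letter {R}.
Arguments op_img_word_cons {R}.
Arguments op_img_word_nil {R}.
Arguments G {R}.
Arguments zq_coef_img {R}.
Arguments fa_add {R}.
Arguments S {R}.
Arguments G_cons {R}.
Arguments S0 {R}.
Arguments S_succ_cons {R}.
Arguments S_nil_succ {R}.
Arguments SL {R}.
Arguments SL_cat {R}.
Arguments SL0 {R}.
Arguments SL_word {R}.
Arguments SL_cons_succ {R}.
Arguments SL_stuffle {R}.
Arguments SL_bil {R}.
Arguments SL_stuffle_lc {R}.
Arguments partial_zq {R}.
Arguments conv {R}.
Arguments Yop {R}.
Arguments tri {R}.
Arguments conv_comm {R}.
Arguments conv_one_l {R}.
Arguments conv_one_r {R}.
Arguments conv_Y {R}.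
Arguments Pop {R}.
Arguments conv_P {R}.
Arguments F {R}.
Arguments F0 {R}.
Arguments shuffle_conv {R}.
Arguments conv_bil {R}.
Arguments eq_big_all {R}.
Arguments zq_shuffle {R}.

Set Implicit Arguments.
Unset Strict Implicit.
Section Main.
Variable R : realType.
Local Notation C := R[i].
Variable q : C.
Hypothesis hq : `|q| < 1.

Definition r := nc q.
Lemma r_lt1 : r < 1.
Proof. by rewrite -ltcR -ncE. Qed.
Lemma r_ge0 : 0 <= r.
Proof. exact: nc_ge0. Qed.

Lemma ncqX m : nc (q ^+ m) = r ^+ m.
Proof. exact: ncX. Qed.

Lemma rX_le1 m : r ^+ m <= 1.
Proof. by rewrite exprn_ile1 ?r_ge0 // ltW // r_lt1. Qed.

Lemma rX_le_r m : (0 < m)%N -> r ^+ m <= r.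
Proof.
case: m => // m _; rewrite exprS.
have := rX_le1 m; have := r_ge0; have := exprn_ge0 m r_ge0; nra.
Qed.

Lemma nc_1mq m : (0 < m)%N -> 1 - r <= nc (1 - q ^+ m).
Proof.
move=> hm.
have h := ncD (1 - q ^+ m) (q ^+ m); rewrite subrK nc1 ncqX in h.
have := rX_le_r hm; lra.
Qed.

Lemma q_nonvanish m : (0 < m)%N -> 1 - q ^+ m != 0.
Proof.
move=> hm; apply/eqP => h.
have := nc_1mq hm; rewrite h nc0; have := r_lt1; lra.
Qed.

Definition K := (1 - r)^-1.
Lemma K_ge1 : 1 <= K.
Proof.
rewrite /K invf_ge1; have := r_lt1; have := r_ge0; lra.
Qed.
Lemma K_ge0 : 0 <= K.
Proof. have := K_ge1; lra. Qed.

Lemma nc_piN m : (0 < m)%N -> nc (piN q m) <= K.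
Proof.
move=> hm; rewrite /piN ncV /K.
have h1 := nc_1mq hm; have h0 : 0 < 1 - r by have := r_lt1; lra.
by rewrite lef_pV2 // posrE; lra.
Qed.

Lemma rhoN_eq m : (0 < m)%N -> rhoN q m = q ^+ m * piN q m.
Proof.
move=> hm; have h := q_nonvanish hm.
rewrite /rhoN /piN; field; by rewrite h.
Qed.

Lemma nc_rhoN m : (0 < m)%N -> nc (rhoN q m) <= r ^+ m * K.
Proof.
move=> hm; rewrite rhoN_eq // ncM ncqX.
by apply: ler_wpM2l; [exact: exprn_ge0 r_ge0 | exact: nc_piN].
Qed.

Lemma nc_rhoN' m : (0 < m)%N -> nc (rhoN q m) <= K.
Proof.
move=> hm; apply: le_trans (nc_rhoN hm) _.
have := rX_le1 m; have := K_ge0; have := exprn_ge0 m r_ge0; nra.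
Qed.

Definition Kl (a : nat * nat) := K ^+ (a.1 + (a.2 - a.1)).
Lemma Kl_ge0 a : 0 <= Kl a.
Proof. exact: exprn_ge0 K_ge0. Qed.

Lemma nc_fa a m : (0 < m)%N -> nc (fa q a m) <= Kl a.
Proof.
move=> hm; rewrite /fa /Kl ncM !ncX exprD.
apply: ler_pM; rewrite ?exprn_ge0 ?nc_ge0 //; apply: lerXn2r; rewrite ?nnegrE ?nc_ge0 ?K_ge0 //.
  exact: nc_rhoN'.
exact: nc_piN.
Qed.

Lemma nc_fa1 a m : (0 < m)%N -> (0 < a.1)%N -> nc (fa q a m) <= r ^+ m * Kl a.
Proof.
move=> hm ha; rewrite /fa /Kl ncM !ncX exprD mulrA.
apply: ler_pM; rewrite ?exprn_ge0 ?nc_ge0 ?mulr_ge0 ?exprn_ge0 ?r_ge0 ?K_ge0 //; last first.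
  by apply: lerXn2r; rewrite ?nnegrE ?nc_ge0 ?K_ge0 //; exact: nc_piN.
case: a.1 ha => // t _; rewrite !exprS mulrA.
apply: ler_pM; rewrite ?exprn_ge0 ?nc_ge0 ?mulr_ge0 ?exprn_ge0 ?r_ge0 ?K_ge0 //.
  exact: nc_rhoN.
by apply: lerXn2r; rewrite ?nnegrE ?nc_ge0 ?K_ge0 //; exact: nc_rhoN'.
Qed.


Definition lam : R := (3 - r) / 2.
Lemma lam_gt1 : 1 < lam.
Proof. rewrite /lam; have := r_lt1; lra. Qed.
Definition rho0 : R := r * lam.
Lemma rho0_ge0 : 0 <= rho0.
Proof. rewrite /rho0 mulr_ge0 ?r_ge0 //; have := lam_gt1; lra. Qed.
Lemma rho0_lt1 : rho0 < 1.
Proof. rewrite /rho0 /lam; have := r_lt1; have := r_ge0; nra. Qed.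

Lemma nc_S_le w m : nc (S q w m) <= \sum_(k < m) nc (G q w k).
Proof. exact: nc_sum. Qed.

Lemma sum_nc_G_nil n : \sum_(m < n) nc (G q [::] m) <= 1.
Proof.
case: n => [|n]; first by rewrite big_ord0.
rewrite big_ord_recl /G op_img_word_nil /ps_one /= nc1 big1 ?addr0 // => i _.
by rewrite op_img_word_nil /ps_one /= nc0.
Qed.

Lemma word_bound w : exists M, 0 <= M /\ forall n, \sum_(m < n) nc (G q w m) <= M * lam ^+ n.
Proof.
have hl := lam_gt1.
elim: w => [|a w [M [M0 hM]]].
  exists 1; split => // n; rewrite mul1r; apply: le_trans (sum_nc_G_nil n) _.
  by apply: exprn_ege1; lra.
have hl1 : 0 < lam - 1 by lra.
exists (Kl a * M / (lam - 1)); split.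
  by rewrite mulr_ge0 ?mulr_ge0 ?Kl_ge0 // invr_ge0 ltW.
move=> n.
have hG : forall m, nc (G q (a :: w) m) <= Kl a * M * lam ^+ m.
  move=> m; rewrite G_cons ncM.
  case: m => [|m].
    by rewrite S0 nc0 mulr0 mulr_ge0 ?mulr_ge0 ?Kl_ge0 ?exprn_ge0 //; lra.
  rewrite -mulrA; apply: ler_pM; rewrite ?nc_ge0 //.
    exact: nc_fa.
  exact: le_trans (nc_S_le w m.+1) (hM m.+1).
have hsum : \sum_(m < n) nc (G q (a :: w) m) <= \sum_(m < n) Kl a * M * lam ^+ m.
  by apply: ler_sum => i _; exact: hG.
apply: (le_trans hsum).
rewrite -mulr_sumr.
have hs : \sum_(i < n) lam ^+ i <= lam ^+ n / (lam - 1).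
  by rewrite ler_pdivlMr // geom_le.
have -> : Kl a * M / (lam - 1) * lam ^+ n = Kl a * M * (lam ^+ n / (lam - 1)) by rewrite mulrAC -mulrA.
by apply: ler_wpM2l => //; rewrite mulr_ge0 ?Kl_ge0.
Qed.

Lemma A0_bound w : A0_word w -> exists K0, 0 <= K0 /\ forall m, nc (G q w m) <= K0 * rho0 ^+ m.
Proof.
case: w => [|a w] //= /andP [ha _].
have [M [M0 hM]] := word_bound w.
exists (Kl a * M); split; first by rewrite mulr_ge0 ?Kl_ge0.
move=> m; rewrite G_cons ncM.
case: m => [|m].
  by rewrite S0 nc0 mulr0 mulr_ge0 ?mulr_ge0 ?Kl_ge0 ?exprn_ge0 ?rho0_ge0.
have -> : Kl a * M * rho0 ^+ m.+1 = (r ^+ m.+1 * Kl a) * (M * lam ^+ m.+1).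
  by rewrite /rho0 exprMn; ring.
apply: ler_pM; rewrite ?nc_ge0 //.
  exact: nc_fa1.
exact: le_trans (nc_S_le w m.+1) (hM m.+1).
Qed.

Lemma lc_bound u : in_A0 u -> exists Ku, 0 <= Ku /\ forall m, nc (zq_coef q (img u) m) <= Ku * rho0 ^+ m.
Proof.
elim: u => [|p u IH] /=.
  by move=> _; exists 0; split => // m; rewrite zq_coef_img big_nil nc0 mul0r.
move=> /andP [hp hu].
have [K0 [K00 hK0]] := A0_bound hp.
have [Ku [Ku0 hKu]] := IH hu.
exists (nc (ratr p.1) * K0 + Ku); split; first by rewrite addr_ge0 ?mulr_ge0 ?nc_ge0.
move=> m; rewrite zq_coef_img big_cons -zq_coef_img.
apply: le_trans (ncD _ _) _.
rewrite mulrDl; apply: lerD => //.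
rewrite (ncM (ratr p.1) (G q p.2 m)) -mulrA.
by apply: ler_wpM2l; rewrite ?nc_ge0.
Qed.

Definition cvgC (s : nat -> C) (L : C) :=
  forall e : R, 0 < e -> exists N, forall n, (N <= n)%N -> nc (s n - L) < e.

Lemma sums_cvgC (a : nat -> C) (l : C) : cvgC (fun n => \sum_(k < n) a k) l -> series_sums_to a l.
Proof.
move=> h e e0; have [N hN] := h e e0; exists N => n /hN.
exact: nc_lt.
Qed.

Lemma cvgC_sums (a : nat -> C) (l : C) : series_sums_to a l -> cvgC (fun n => \sum_(k < n) a k) l.
Proof.
move=> h e e0; have [N hN] := h e e0; exists N => n /hN.
by rewrite ncE ltcR.
Qed.

Lemma cvgC_ext (s t : nat -> C) (L : C) : (forall n, s n = t n) -> cvgC s L -> cvgC t L.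
Proof.
move=> h hs e e0; have [N hN] := hs e e0; exists N => n /hN.
by rewrite h.
Qed.

Lemma cvgC_mul (s t : nat -> C) (A B : C) : cvgC s A -> cvgC t B -> cvgC (fun n => s n * t n) (A * B).
Proof.
move=> hs ht e e0.
set a := nc A; set b := nc B.
have a0 : 0 <= a := nc_ge0 A; have b0 : 0 <= b := nc_ge0 B.
set d := e / (2 * (a + b + 1)).
have d0 : 0 < d by rewrite /d divr_gt0 //; lra.
have hde : d * (a + b + 1) = e / 2 by rewrite /d; field; lra.
set d1 := Num.min d 1.
have d10 : 0 < d1 by rewrite /d1 lt_min d0 ltr01.
have d1d : d1 <= d by rewrite /d1 ge_min lexx.
have d11 : d1 <= 1 by rewrite /d1 ge_min lexx orbT.
have [N1 h1] := hs d1 d10; have [N2 h2] := ht d d0.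
exists (maxn N1 N2) => n hn.
have k1 := h1 n (leq_trans (leq_maxl _ _) hn).
have k2 := h2 n (leq_trans (leq_maxr _ _) hn).
have -> : s n * t n - A * B = s n * (t n - B) + B * (s n - A) by ring.
apply: le_lt_trans (ncD _ _) _; rewrite !ncM.
have hsn : nc (s n) <= a + 1.
  have := ncD (s n - A) A; rewrite subrK; lra.
have e1 : nc (s n) * nc (t n - B) <= (a + 1) * d.
  apply: ler_pM; rewrite ?nc_ge0 //; lra.
have e2 : b * nc (s n - A) <= b * d.
  apply: ler_wpM2l => //; lra.
have : (a + 1) * d + b * d = e / 2 by rewrite -hde; ring.
lra.
Qed.

Lemma cvgC_sub0 (s dd : nat -> C) (L : C) : cvgC s L ->
  (forall e : R, 0 < e -> exists N, forall n, (N <= n)%N -> nc (dd n) <= e) ->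
  cvgC (fun n => s n - dd n) L.
Proof.
move=> hs hd e e0.
have e2 : 0 < e / 2 by lra.
have [N1 h1] := hs _ e2; have [N2 h2] := hd _ e2.
exists (maxn N1 N2) => n hn.
have k1 := h1 n (leq_trans (leq_maxl _ _) hn).
have k2 := h2 n (leq_trans (leq_maxr _ _) hn).
have -> : s n - dd n - L = (s n - L) - dd n by ring.
apply: le_lt_trans (ncB _ _) _; lra.
Qed.


Lemma exists_limit u : in_A0 u -> exists z, zq_is q (img u) z.
Proof.
move=> hu; have [Ku [Ku0 hK]] := lc_bound hu.
apply: (@abs_cvg_C _ _ (Ku * (1 - rho0)^-1)) => N.
have h1 : \sum_(n < N) nc (zq_coef q (img u) n) <= \sum_(n < N) Ku * rho0 ^+ n.
  by apply: ler_sum => i _; exact: hK.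
apply: (le_trans h1); rewrite -mulr_sumr; apply: ler_wpM2l => //.
have h0 : 0 < 1 - rho0 by have := rho0_lt1; lra.
by rewrite -[_^-1]mul1r ler_pdivlMr // geom_lt1 ?rho0_ge0 ?rho0_lt1.
Qed.

Lemma tail_bound (b : nat -> C) Kb : 0 <= Kb -> (forall m, nc (b m) <= Kb * rho0 ^+ m) ->
  forall M k, nc (\sum_(j < M + k) b j - \sum_(j < M) b j) * (1 - rho0) <=
    Kb * (rho0 ^+ M - rho0 ^+ (M + k)).
Proof.
move=> K0 hb M k; elim: k => [|k IH].
  by rewrite addn0 subrr nc0 mul0r subrr mulr0.
rewrite addnS big_ord_recr /= addrAC.
have h1 := ncD (\sum_(j < M + k) b j - \sum_(j < M) b j) (b (M + k)%N).
have h0 : 0 <= 1 - rho0 by have := rho0_lt1; lra.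
have h2 := ler_wpM2r h0 h1.
have h3 := ler_wpM2r h0 (hb (M + k)%N).
rewrite exprS.
move: IH h2 h3; set X := nc (_ - _); set Y := nc (_ + _); set Z := nc (b _).
set p := rho0 ^+ (M + k); set p0 := rho0 ^+ M.
move=> IH h2 h3.
have -> : Kb * (p0 - rho0 * p) = Kb * (p0 - p) + Kb * p * (1 - rho0) by ring.
rewrite mulrDl in h2.
lra.
Qed.

Lemma tail_bound' (b : nat -> C) Kb : 0 <= Kb -> (forall m, nc (b m) <= Kb * rho0 ^+ m) ->
  forall M N, (M <= N)%N -> nc (\sum_(j < N) b j - \sum_(j < M) b j) <= Kb * rho0 ^+ M / (1 - rho0).
Proof.
move=> K0 hb M N hMN.
have h0 : 0 < 1 - rho0 by have := rho0_lt1; lra.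
rewrite ler_pdivlMr // -(subnKC hMN).
apply: (le_trans (tail_bound K0 hb M (N - M))).
by rewrite ler_wpM2l // lerBlDr lerDl exprn_ge0 // rho0_ge0.
Qed.

Lemma diff_eq (a b : nat -> C) N :
  (\sum_(k < N) a k) * (\sum_(k < N) b k) - \sum_(n < N) conv a b n =
  \sum_(i < N) a i * (\sum_(k < N) b k - \sum_(j < (N - i)%N) b j).
Proof.
rewrite tri mulr_suml -sumrB; apply: eq_bigr => i _.
by rewrite mulrBr.
Qed.

Lemma diff_bound (a b : nat -> C) Ka Kb : 0 <= Ka -> 0 <= Kb ->
  (forall m, nc (a m) <= Ka * rho0 ^+ m) -> (forall m, nc (b m) <= Kb * rho0 ^+ m) ->
  forall N, nc ((\sum_(k < N) a k) * (\sum_(k < N) b k) - \sum_(n < N) conv a b n)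
    <= N%:R * rho0 ^+ N * (Ka * Kb / (1 - rho0)).
Proof.
move=> Ka0 Kb0 ha hb N.
have h0 : 0 < 1 - rho0 by have := rho0_lt1; lra.
rewrite diff_eq.
have hs : nc (\sum_(i < N) a i * (\sum_(k < N) b k - \sum_(j < (N - i)%N) b j)) <=
  \sum_(i < N) nc (a i * (\sum_(k < N) b k - \sum_(j < (N - i)%N) b j)) by exact: nc_sum.
apply: (le_trans hs).
have hi : forall i : 'I_N, nc (a i * (\sum_(k < N) b k - \sum_(j < (N - i)%N) b j))
    <= rho0 ^+ N * (Ka * Kb / (1 - rho0)).
  move=> i; rewrite ncM.
  have hiN : ((N - i) <= N)%N by rewrite leq_subr.
  have t := tail_bound' Kb0 hb hiN.
  apply: (le_trans (ler_pM (nc_ge0 _) (nc_ge0 _) (ha i) t)).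
  have -> : rho0 ^+ N = rho0 ^+ i * rho0 ^+ (N - i) by rewrite -exprD subnKC // ltnW.
  by rewrite !mulrA -!mulrA le_eqVlt; apply/orP; left; apply/eqP; ring.
have hs2 : \sum_(i < N) nc (a i * (\sum_(k < N) b k - \sum_(j < (N - i)%N) b j)) <=
  \sum_(i < N) rho0 ^+ N * (Ka * Kb / (1 - rho0)) by apply: ler_sum => i _; exact: hi.
apply: (le_trans hs2).
by rewrite sumr_const card_ord -mulr_natl le_eqVlt; apply/orP; left; apply/eqP; ring.
Qed.


Lemma in_A0_allYG u : in_A0 u -> allYG u.
Proof.
elim: u => [|p u IH] //= /andP [hp hu]; rewrite IH // andbT.
by move: hp; case: p.2 => [|a w] //= /andP [_ h].
Qed.

Lemma main_thm u v : in_A0 u -> in_A0 v ->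
  exists zu zv : C,
    [/\ zq_is q (img u) zu,
        zq_is q (img v) zv,
        zq_is q (img (stuffle u v)) (zu * zv)
      & zq_is q (shuffle (img u) (img v)) (zu * zv)].
Proof.
move=> hu hv.
have [zu hzu] := exists_limit hu; have [zv hzv] := exists_limit hv.
exists zu, zv; split => //.
  apply: sums_cvgC.
  apply: (cvgC_ext _ (cvgC_mul (cvgC_sums hzu) (cvgC_sums hzv))) => n.
  by rewrite !partial_zq SL_stuffle_lc // in_A0_allYG.
have [Ka [Ka0 hKa]] := lc_bound hu; have [Kb [Kb0 hKb]] := lc_bound hv.
apply: sums_cvgC.
set a := zq_coef q (img u); set b := zq_coef q (img v).
set D := fun n => (\sum_(k < n) a k) * (\sum_(k < n) b k) - \sum_(k < n) conv a b k.
have hD : forall e : R, 0 < e -> exists N, forall n, (N <= n)%N -> nc (D n) <= e.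
  move=> e e0.
  set Cst := Ka * Kb / (1 - rho0).
  have h0 : 0 < 1 - rho0 by have := rho0_lt1; lra.
  have C0 : 0 <= Cst by rewrite /Cst divr_ge0 ?mulr_ge0 // ltW.
  have e1 : 0 < e / (Cst + 1) by rewrite divr_gt0 //; lra.
  have [N hN] := npow_small rho0 rho0_ge0 rho0_lt1 _ e1.
  exists N => n hn.
  apply: (le_trans (diff_bound Ka0 Kb0 hKa hKb n)).
  have := hN n hn; rewrite -/Cst.
  have hx : e / (Cst + 1) * Cst <= e.
    rewrite mulrAC ler_pdivrMr; last lra.
    by rewrite ler_wpM2l; [| lra | lra].
  have := nc_ge0 (D n).
  set X := n%:R * rho0 ^+ n => _ hX.
  apply: (le_trans _ hx); exact: ler_wpM2r.
have hcv := cvgC_sub0 (cvgC_mul (cvgC_sums hzu) (cvgC_sums hzv)) hD.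
apply: (cvgC_ext _ hcv) => n.
rewrite /D opprB addrC subrK.
by apply: eq_bigr => k _; rewrite zq_shuffle //; exact: q_nonvanish.
Qed.

End Main.

Local Close Scope complex_scope.

Theorem theorem9p2 (R : realType) (q : R[i]) (hq : `|q| < 1)
    (u v : lc (nat * nat)) (hu : in_A0 u) (hv : in_A0 v) :
  exists zu zv : R[i],
    [/\ zq_is q (img u) zu,
        zq_is q (img v) zv,
        zq_is q (img (stuffle u v)) (zu * zv)
      & zq_is q (shuffle (img u) (img v)) (zu * zv)].
Proof. exact: main_thm. Qed.
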